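(* Define $\sigma:\mathbb{R}\to\mathbb{R}$ by $\sigma(x)=-1$ for $x\in(-1,0]$, $\sigma(x)=1$ for $x\in(0,1]$, and recursively, for every integer $n\ge0$, $$\sigma(x)=\sigma(x+2\cdot3^n)-\frac1{(n+1)^2}\ \text{ for }x\in(-3^{n+1},-3^n],\qquad \sigma(x)=\sigma(x-2\cdot3^n)+\frac1{(n+1)^2}\ \text{ for }x\in(3^n,3^{n+1}].$$ Then for every $x\ge1$, $$\int_0^x\sigma(t)\,dt\ \ge\ \frac{x}{2(\log_3x+1)^2}.$$ *)

(* Defs.v *)
From Stdlib Require Import Reals Lra Lia ZArith.
Open Scope R_scope.

(* sigma_aux k x computes sigma(x) correctly for x in (-3^k, 3^k],
   unfolding the recursive definition level by level. *)
Fixpoint sigma_aux (k : nat) (x : R) : R :=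
  match k with
  | O => if Rle_dec x 0 then -1 else 1
  | S k' =>
      if Rlt_dec (3 ^ k') x then
        sigma_aux k' (x - 2 * 3 ^ k') + 1 / (INR k' + 1) ^ 2
      else if Rle_dec x (- 3 ^ k') then
        sigma_aux k' (x + 2 * 3 ^ k') - 1 / (INR k' + 1) ^ 2
      else sigma_aux k' x
  end.

(* Enough fuel: 3^N >= N+1 > |x| when N = up |x| (as a natural). *)
Definition sigmaF (x : R) : R := sigma_aux (Z.to_nat (up (Rabs x))) x.

Definition log3 (x : R) : R := ln x / ln 3.

(* Main.v *)
Require Import Defs.
From Stdlib Require Import Reals Lra Lia ZArith.
Open Scope R_scope.

Lemma pow3_pos k : 0 < 3 ^ k.
Proof. apply pow_lt; lra. Qed.

Lemma sigma_aux_stable k x : - 3 ^ k < x <= 3 ^ k -> sigma_aux (S k) x = sigma_aux k x.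
Proof.
  intros H. simpl sigma_aux.
  destruct (Rlt_dec (3 ^ k) x); [lra|].
  destruct (Rle_dec x (- 3 ^ k)); [lra|]. reflexivity.
Qed.

Lemma sigma_aux_stable_plus d k x : - 3 ^ k < x <= 3 ^ k -> sigma_aux (d + k) x = sigma_aux k x.
Proof.
  intros H. induction d as [|d IH]; [reflexivity|].
  change (S d + k)%nat with (S (d + k)).
  rewrite sigma_aux_stable; [exact IH|].
  assert (3 ^ k <= 3 ^ (d + k)) by (apply Rle_pow; [lra|lia]). lra.
Qed.

Lemma INR_le_pow3 n : INR n <= 3 ^ n.
Proof.
  induction n as [|n IH]; [simpl; lra|].
  rewrite S_INR. pose proof (pow3_pos n). simpl. pose proof (pos_INR n).
  assert (3 ^ 0 <= 3 ^ n) by (apply Rle_pow; [lra|lia]). simpl in *; lra.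
Qed.

Lemma sigmaF_eq k x : - 3 ^ k < x <= 3 ^ k -> sigmaF x = sigma_aux k x.
Proof.
  intros H. unfold sigmaF.
  set (N := Z.to_nat (up (Rabs x))).
  assert (HN : - 3 ^ N < x <= 3 ^ N).
  { destruct (archimed (Rabs x)) as [H1 H2].
    assert (Hz : (0 <= up (Rabs x))%Z).
    { apply le_IZR. pose proof (Rabs_pos x). lra. }
    assert (E : INR N = IZR (up (Rabs x))).
    { unfold N. rewrite INR_IZR_INZ, Z2Nat.id; auto. }
    pose proof (INR_le_pow3 N).
    pose proof (Rle_abs x). pose proof (Rle_abs (-x)). rewrite Rabs_Ropp in *. lra. }
  destruct (Nat.le_ge_cases N k) as [Hle|Hle].
  - replace k with ((k - N) + N)%nat by lia. rewrite sigma_aux_stable_plus; auto.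
  - replace N with ((N - k) + k)%nat by lia. rewrite sigma_aux_stable_plus; auto.
Qed.

Lemma pow3_IZR k : IZR (3 ^ Z.of_nat k) = 3 ^ k.
Proof. rewrite <- pow_IZR. reflexivity. Qed.

Lemma pow3_Z_succ k : (3 ^ Z.of_nat (S k) = 3 * 3 ^ Z.of_nat k)%Z.
Proof. rewrite Nat2Z.inj_succ, Z.pow_succ_r; lia. Qed.

Lemma pow3_Z_pos k : (0 < 3 ^ Z.of_nat k)%Z.
Proof. apply Z.pow_pos_nonneg; lia. Qed.

Ltac pushZ := repeat (rewrite ?plus_IZR, ?minus_IZR, ?mult_IZR, ?opp_IZR).

Lemma sigma_aux_step k : forall (z : Z) x,
  (1 - 3 ^ Z.of_nat k <= z <= 3 ^ Z.of_nat k)%Z ->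
  IZR z - 1 < x <= IZR z -> sigma_aux k x = sigma_aux k (IZR z).
Proof.
  induction k as [|k IH]; intros z x Hz Hx.
  - simpl in Hz. simpl sigma_aux.
    assert (z = 0 \/ z = 1)%Z as [->| ->] by lia;
    destruct (Rle_dec x 0); destruct (Rle_dec _ 0); auto; simpl in *; lra.
  - rewrite pow3_Z_succ in Hz.
    pose proof (pow3_Z_pos k).
    set (p := (3 ^ Z.of_nat k)%Z) in *.
    assert (Hp : IZR p = 3 ^ k) by apply pow3_IZR. pose proof (pow3_pos k).
    cbn [sigma_aux].
    destruct (Z_lt_le_dec p z) as [H1|H1].
    + assert (IZR p + 1 <= IZR z) by (rewrite <- plus_IZR; apply IZR_le; lia).
      destruct (Rlt_dec (3 ^ k) x); [|lra].
      destruct (Rlt_dec (3 ^ k) (IZR z)); [|lra].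
      rewrite (IH (z - 2 * p)%Z); [| lia | pushZ; lra].
      f_equal. f_equal. pushZ. lra.
    + destruct (Z_le_gt_dec z (- p)) as [H2|H2].
      * assert (IZR z <= - IZR p) by (rewrite <- opp_IZR; apply IZR_le; lia).
        destruct (Rlt_dec (3 ^ k) x); [lra|].
        destruct (Rlt_dec (3 ^ k) (IZR z)); [lra|].
        destruct (Rle_dec x (- 3 ^ k)); [|lra].
        destruct (Rle_dec (IZR z) (- 3 ^ k)); [|lra].
        rewrite (IH (z + 2 * p)%Z); [| lia | pushZ; lra].
        f_equal. f_equal. pushZ. lra.
      * assert (IZR z <= IZR p) by (apply IZR_le; lia).
        assert (- IZR p + 1 <= IZR z) by (rewrite <- opp_IZR, <- plus_IZR; apply IZR_le; lia).
        destruct (Rlt_dec (3 ^ k) x); [lra|].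
        destruct (Rlt_dec (3 ^ k) (IZR z)); [lra|].
        destruct (Rle_dec x (- 3 ^ k)); [lra|].
        destruct (Rle_dec (IZR z) (- 3 ^ k)); [lra|].
        apply IH; [lia|lra].
Qed.

Lemma sigma_aux_anti k : forall (z : Z),
  (1 - 3 ^ Z.of_nat k <= z <= 3 ^ Z.of_nat k)%Z ->
  sigma_aux k (IZR (1 - z)) = - sigma_aux k (IZR z).
Proof.
  induction k as [|k IH]; intros z Hz.
  - simpl in Hz. simpl sigma_aux.
    assert (z = 0 \/ z = 1)%Z as [->| ->] by lia; simpl;
    destruct (Rle_dec _ 0); destruct (Rle_dec _ 0); lra.
  - rewrite pow3_Z_succ in Hz.
    pose proof (pow3_Z_pos k).
    set (p := (3 ^ Z.of_nat k)%Z) in *.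
    assert (Hp : IZR p = 3 ^ k) by apply pow3_IZR. pose proof (pow3_pos k).
    cbn [sigma_aux].
    destruct (Z_lt_le_dec p z) as [H1|H1].
    + assert (IZR p + 1 <= IZR z) by (rewrite <- plus_IZR; apply IZR_le; lia).
      assert (IZR (1 - z) <= - IZR p) by (rewrite <- opp_IZR; apply IZR_le; lia).
      destruct (Rlt_dec (3 ^ k) (IZR (1 - z))); [lra|].
      destruct (Rle_dec (IZR (1 - z)) (- 3 ^ k)); [|lra].
      destruct (Rlt_dec (3 ^ k) (IZR z)); [|lra].
      replace (IZR (1 - z) + 2 * 3 ^ k) with (IZR (1 - (z - 2 * p))) by (pushZ; lra).
      replace (IZR z - 2 * 3 ^ k) with (IZR (z - 2 * p)) by (pushZ; lra).
      rewrite IH by lia. lra.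
    + destruct (Z_le_gt_dec z (- p)) as [H2|H2].
      * assert (IZR z <= - IZR p) by (rewrite <- opp_IZR; apply IZR_le; lia).
        assert (IZR p + 1 <= IZR (1 - z)) by (rewrite <- plus_IZR; apply IZR_le; lia).
        destruct (Rlt_dec (3 ^ k) (IZR (1 - z))); [|lra].
        destruct (Rlt_dec (3 ^ k) (IZR z)); [lra|].
        destruct (Rle_dec (IZR z) (- 3 ^ k)); [|lra].
        replace (IZR (1 - z) - 2 * 3 ^ k) with (IZR (1 - (z + 2 * p))) by (pushZ; lra).
        replace (IZR z + 2 * 3 ^ k) with (IZR (z + 2 * p)) by (pushZ; lra).
        rewrite IH by lia. lra.
      * assert (IZR z <= IZR p) by (apply IZR_le; lia).
        assert (- IZR p + 1 <= IZR z) by (rewrite <- opp_IZR, <- plus_IZR; apply IZR_le; lia).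
        assert (IZR (1 - z) <= IZR p) by (apply IZR_le; lia).
        assert (- IZR p + 1 <= IZR (1 - z)) by (rewrite <- opp_IZR, <- plus_IZR; apply IZR_le; lia).
        destruct (Rlt_dec (3 ^ k) (IZR (1 - z))); [lra|].
        destruct (Rle_dec (IZR (1 - z)) (- 3 ^ k)); [lra|].
        destruct (Rlt_dec (3 ^ k) (IZR z)); [lra|].
        destruct (Rle_dec (IZR z) (- 3 ^ k)); [lra|].
        apply IH; lia.
Qed.

Definition cc (n : nat) : R := 1 / (INR n + 1) ^ 2.

Lemma F1 n x : 3 ^ n < x <= 3 ^ (S n) -> sigmaF x = sigmaF (x - 2 * 3 ^ n) + cc n.
Proof.
  intros H. pose proof (pow3_pos n). simpl in H.
  rewrite (sigmaF_eq (S n) x) by (simpl; lra).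
  cbn [sigma_aux]. destruct (Rlt_dec (3 ^ n) x); [|lra].
  rewrite (sigmaF_eq n (x - 2 * 3 ^ n)) by lra. reflexivity.
Qed.

Lemma F2nat n m : INR m <= 3 ^ n -> sigmaF (1 - INR m) = - sigmaF (INR m).
Proof.
  intros H. pose proof (pow3_pos n). pose proof (pos_INR m).
  assert (3 ^ 0 <= 3 ^ n) by (apply Rle_pow; [lra|lia]). simpl in *.
  rewrite (sigmaF_eq n (1 - INR m)) by lra.
  rewrite (sigmaF_eq n (INR m)) by lra.
  rewrite INR_IZR_INZ in *.
  replace (1 - IZR (Z.of_nat m)) with (IZR (1 - Z.of_nat m)) by (rewrite minus_IZR; reflexivity).
  apply sigma_aux_anti.
  assert (Z.of_nat m <= 3 ^ Z.of_nat n)%Z by (apply le_IZR; rewrite pow3_IZR; lra).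
  lia.
Qed.

Lemma stepF j x : INR j < x <= INR j + 1 -> sigmaF x = sigmaF (INR (S j)).
Proof.
  intros H. pose proof (pos_INR j). pose proof (INR_le_pow3 (S j)).
  rewrite S_INR in *.
  rewrite (sigmaF_eq (S j) x) by lra.
  rewrite (sigmaF_eq (S j) (INR j + 1)) by lra.
  replace (INR j + 1) with (IZR (Z.of_nat (S j))) by (rewrite <- INR_IZR_INZ, S_INR; reflexivity).
  apply sigma_aux_step.
  - assert (Z.of_nat (S j) <= 3 ^ Z.of_nat (S j))%Z.
    { apply le_IZR. rewrite pow3_IZR, <- INR_IZR_INZ, S_INR. lra. }
    lia.
  - rewrite <- INR_IZR_INZ, S_INR. lra.
Qed.

Fixpoint Ssum (m : nat) : R :=
  match m with
  | O => 0
  | S m' => Ssum m' + sigmaF (INR m)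
  end.

Lemma INR_P n : INR (3 ^ n) = 3 ^ n.
Proof. rewrite pow_INR. simpl. f_equal. lra. Qed.

Lemma L2 n : forall e, (e <= 3 ^ n)%nat ->
  Ssum (3 ^ n + e) = Ssum (3 ^ n - e) + cc n * INR e.
Proof.
  pose proof (INR_P n) as HP. pose proof (pow3_pos n).
  induction e as [|e IH]; intros He.
  - rewrite Nat.add_0_r, Nat.sub_0_r. simpl. ring.
  - rewrite Nat.add_succ_r. cbn [Ssum]. rewrite IH by lia.
    replace (3 ^ n - e)%nat with (S (3 ^ n - S e)) by lia. cbn [Ssum].
    replace (S (3 ^ n - S e)) with (3 ^ n - e)%nat by lia.
    rewrite (F1 n (INR (S (3 ^ n + e)))) by (rewrite S_INR, plus_INR, HP; pose proof (pos_INR e);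
      apply le_INR in He; rewrite HP, S_INR in He; simpl; lra).
    replace (INR (S (3 ^ n + e)) - 2 * 3 ^ n) with (1 - INR (3 ^ n - e))
      by (rewrite S_INR, plus_INR, minus_INR, HP by lia; lra).
    rewrite (F2nat n) by (rewrite minus_INR, HP by lia; pose proof (pos_INR e); lra).
    rewrite S_INR. ring.
Qed.

Lemma L1 n : forall d, (d <= 3 ^ n)%nat ->
  Ssum (3 ^ n + 3 ^ n + d) = Ssum d + cc n * (3 ^ n + INR d).
Proof.
  pose proof (INR_P n) as HP. pose proof (pow3_pos n).
  induction d as [|d IH]; intros Hd.
  - rewrite Nat.add_0_r. rewrite L2 by lia. rewrite Nat.sub_diag, HP. simpl. ring.
  - rewrite Nat.add_succ_r. cbn [Ssum]. rewrite IH by lia.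
    rewrite (F1 n (INR (S (3 ^ n + 3 ^ n + d)))) by (rewrite S_INR, !plus_INR, HP; pose proof (pos_INR d);
      apply le_INR in Hd; rewrite HP, S_INR in Hd; simpl; lra).
    replace (INR (S (3 ^ n + 3 ^ n + d)) - 2 * 3 ^ n) with (INR (S d))
      by (rewrite !S_INR, !plus_INR, HP; lra).
    rewrite !S_INR. ring.
Qed.

Lemma cc_pos n : 0 < cc n.
Proof. unfold cc. pose proof (pos_INR n). apply Rdiv_lt_0_compat; [lra|]. apply pow_lt; lra. Qed.

Lemma cc_dec n : cc (S n) <= cc n.
Proof.
  unfold cc. rewrite S_INR. pose proof (pos_INR n). unfold Rdiv. rewrite !Rmult_1_l.
  apply Rinv_le_contravar; [apply pow_lt; lra|]. simpl. nra.
Qed.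

Lemma Ssum1 : Ssum 1 = 1.
Proof.
  simpl. rewrite (sigmaF_eq 0 1) by (simpl; lra). simpl.
  destruct (Rle_dec 1 0); lra.
Qed.

Lemma H_to_D n : (forall m, (m <= 3 ^ n)%nat -> Ssum m >= cc n * INR m / 2) ->
  forall m, (m <= 3 ^ S n)%nat -> Ssum m >= cc n * INR m / 2.
Proof.
  intros H m Hm. pose proof (cc_pos n). pose proof (INR_P n) as HP.
  assert (E : (3 ^ S n = 3 ^ n + 3 ^ n + 3 ^ n)%nat) by (simpl; lia).
  destruct (Nat.le_gt_cases m (3 ^ n)) as [H1|H1]; [auto|].
  destruct (Nat.le_gt_cases m (3 ^ n + 3 ^ n)) as [H2|H2].
  - replace m with (3 ^ n + (m - 3 ^ n))%nat by lia.
    rewrite L2 by lia.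
    specialize (H (3 ^ n - (m - 3 ^ n))%nat ltac:(lia)).
    rewrite !minus_INR in H by lia. rewrite plus_INR, minus_INR by lia.
    rewrite HP in *. nra.
  - replace m with (3 ^ n + 3 ^ n + (m - (3 ^ n + 3 ^ n)))%nat by lia.
    rewrite L1 by lia.
    set (d := (m - (3 ^ n + 3 ^ n))%nat).
    specialize (H d ltac:(unfold d; lia)).
    pose proof (pos_INR d).
    rewrite !plus_INR, HP. nra.
Qed.

Lemma Dn n : forall m, (m <= 3 ^ S n)%nat -> Ssum m >= cc n * INR m / 2.
Proof.
  apply H_to_D. induction n as [|n IH].
  - intros m Hm. simpl in Hm. pose proof (cc_pos 0).
    assert (m = 0 \/ m = 1)%nat as [-> | ->] by lia.
    + simpl. lra.
    + rewrite Ssum1. unfold cc. simpl. lra.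
  - intros m Hm. pose proof (H_to_D n IH m Hm).
    pose proof (cc_dec n). pose proof (pos_INR m). nra.
Qed.

Lemma const_isstep f a b v : a <= b -> (forall x, a < x < b -> f x = v) -> IsStepFun f a b.
Proof.
  intros Hab Hf. exists (cons a (cons b nil)). exists (cons v nil).
  unfold adapted_couple. repeat split.
  - intros i Hi. simpl in Hi. assert (i = 0%nat) by lia. subst. simpl. lra.
  - simpl. rewrite Rmin_left; lra.
  - simpl. rewrite Rmax_right; lra.
  - intros i Hi. simpl in Hi. assert (i = 0%nat) by lia. subst. simpl.
    intros x Hx. apply Hf. exact Hx.
Qed.

Lemma const_integrable f a b v : a <= b -> (forall x, a < x < b -> f x = v) ->
  Riemann_integrable f a b.
Proof.
  intros Hab Hf eps.
  exists (mkStepFun (const_isstep f a b v Hab Hf)).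
  exists (mkStepFun (StepFun_P4 a b 0)).
  split.
  - intros t _. simpl. unfold fct_cte. rewrite Rminus_diag, Rabs_R0. lra.
  - rewrite StepFun_P18, Rmult_0_l, Rabs_R0. apply cond_pos.
Qed.

Lemma const_value f a b v (pr : Riemann_integrable f a b) : a <= b ->
  (forall x, a < x < b -> f x = v) -> RiemannInt pr = v * (b - a).
Proof.
  intros Hab Hf.
  rewrite (RiemannInt_P18 pr (RiemannInt_P14 a b v) Hab).
  - apply RiemannInt_P15.
  - intros x Hx. unfold fct_cte. auto.
Qed.

Lemma piece j y : INR j <= y <= INR j + 1 ->
  { pr : Riemann_integrable sigmaF (INR j) y | RiemannInt pr = sigmaF (INR (S j)) * (y - INR j) }.
Proof.
  intros Hy.
  assert (Hf : forall x, INR j < x < y -> sigmaF x = sigmaF (INR (S j))).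
  { intros x Hx. apply stepF. lra. }
  exists (const_integrable _ _ _ _ (proj1 Hy) Hf).
  apply const_value; [lra|exact Hf].
Qed.

Lemma IntNat m : { pr : Riemann_integrable sigmaF 0 (INR m) | RiemannInt pr = Ssum m }.
Proof.
  induction m as [|m [pr1 H1]].
  - exists (RiemannInt_P7 sigmaF 0). apply RiemannInt_P9.
  - destruct (piece m (INR (S m))) as [pr2 H2]; [rewrite S_INR; lra|].
    exists (RiemannInt_P24 pr1 pr2).
    rewrite <- (RiemannInt_P26 pr1 pr2 (RiemannInt_P24 pr1 pr2)).
    rewrite H1, H2. cbn [Ssum]. rewrite S_INR. ring.
Qed.

Lemma ex_m x : 0 < x -> exists m, INR m < x <= INR m + 1.
Proof.
  intros Hx.
  assert (G : forall N x, 0 < x <= INR N -> exists m, INR m < x <= INR m + 1).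
  { induction N as [|N IH]; intros y Hy.
    - simpl in Hy. lra.
    - rewrite S_INR in Hy. destruct (Rle_dec y (INR N)).
      + apply IH. lra.
      + exists N. lra. }
  destruct (archimed x) as [A1 A2].
  assert (Hz : (0 <= up x)%Z) by (apply le_IZR; lra).
  apply (G (Z.to_nat (up x))). rewrite INR_IZR_INZ, Z2Nat.id by exact Hz. lra.
Qed.

Lemma ex_n x : 1 <= x -> exists n, 3 ^ n <= x <= 3 ^ S n.
Proof.
  intros Hx.
  assert (G : forall N y, 1 <= y <= 3 ^ N -> exists n, 3 ^ n <= y <= 3 ^ S n).
  { induction N as [|N IH]; intros y Hy.
    - exists 0%nat. simpl in *. lra.
    - destruct (Rle_dec y (3 ^ N)).
      + apply IH. lra.
      + exists N. lra. }
  destruct (ex_m x) as [m Hm]; [lra|].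
  apply (G (S m)). pose proof (INR_le_pow3 (S m)). rewrite S_INR in *. lra.
Qed.

Lemma log_bound x n : 3 ^ n <= x -> INR n <= log3 x.
Proof.
  intros H. pose proof (pow3_pos n).
  assert (L3 : 0 < ln 3) by (rewrite <- ln_1; apply ln_increasing; lra).
  assert (Hl : INR n * ln 3 <= ln x).
  { rewrite <- ln_pow by lra. destruct (Rle_lt_or_eq_dec _ _ H) as [h|h].
    - left. apply ln_increasing; lra.
    - rewrite h. lra. }
  unfold log3. apply (Rmult_le_reg_r (ln 3)); [exact L3|].
  unfold Rdiv. rewrite Rmult_assoc, Rinv_l by lra. lra.
Qed.

Theorem mainTheorem5 :
  forall x : R, 1 <= x ->
    exists pr : Riemann_integrable sigmaF 0 x,
      RiemannInt pr >= x / (2 * (log3 x + 1) ^ 2).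
Proof.
  intros x Hx.
  destruct (ex_n x Hx) as [n Hn].
  destruct (ex_m x) as [m Hm]; [lra|].
  destruct (IntNat m) as [pr1 H1].
  destruct (piece m x) as [pr2 H2]; [lra|].
  exists (RiemannInt_P24 pr1 pr2).
  rewrite <- (RiemannInt_P26 pr1 pr2 (RiemannInt_P24 pr1 pr2)).
  rewrite H1, H2.
  assert (Hm3 : (S m <= 3 ^ S n)%nat).
  { assert (m < 3 ^ S n)%nat; [|lia].
    apply INR_lt. rewrite INR_P. lra. }
  pose proof (Dn n m ltac:(lia)) as D1.
  pose proof (Dn n (S m) Hm3) as D2.
  cbn [Ssum] in D2. rewrite S_INR in D2. rewrite S_INR.
  pose proof (cc_pos n).
  assert (Main : Ssum m + sigmaF (INR m + 1) * (x - INR m) >= cc n * x / 2).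
  { assert (0 < x - INR m <= 1) by lra.
    set (s := sigmaF (INR m + 1)) in *.
    nra. }
  assert (Hlog : INR n <= log3 x) by (apply log_bound; lra).
  pose proof (pos_INR n).
  assert (Fin : x / (2 * (log3 x + 1) ^ 2) <= cc n * x / 2).
  { unfold cc. replace (1 / (INR n + 1) ^ 2 * x / 2) with (x / (2 * (INR n + 1) ^ 2))
      by (field; lra).
    unfold Rdiv. apply Rmult_le_compat_l; [lra|].
    apply Rinv_le_contravar; [nra|]. nra. }
  lra.
Qed.
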